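(* Let $R$ be a $*$-ring. The following are equivalent: (1) ${\rm psr}(R)=1$ and $R$ is $*$-abelian. (2) For any $a,b\in R$ with $aR+bR=R$ there exists a projection $p$ with $pa=ap$ such that $a+bp\in U(R)$. (3) ${\rm isr}(R)=1$ and every idempotent of $R$ is a projection. (4) $R$ is clean and every idempotent of $R$ is a projection; equivalently, $R$ is exchange and every idempotent of $R$ is a projection. (5) $R$ is $*$-clean and $*$-abelian. (6) $R$ is strongly $*$-clean. (7) For every $a\in R$ there exists a projection $p\in aR$ such that $1-p\in(1-a)R$.
   Context: Rings are associative with identity. A $*$-ring is a ring with an involution $*$ ($(x+y)^*=x^*+y^*$, $(xy)^*=y^*x^*$, $(x^* )^*=x$). A projection is $p$ with $p^2=p=p^*$; $U(R)$ is the unit group. $R$ is clean if each element is a sum of an idempotent and a unit; $*$-clean if each element is a sum of a projection and a unit; strongly $*$-clean if each element is a sum of a projection and a unit that commute. $R$ is exchange if for every $a\in R$ there is an idempotent $e\in aR$ with $1-e\in(1-a)R$. $R$ is $*$-abelian if every projection is central. ${\rm isr}(R)=1$ means: whenever $aR+bR=R$, there is an idempotent $e$ with $a+be\in U(R)$. ${\rm psr}(R)=1$ means: whenever $aR+bR=R$, there is a projection $p$ with $a+bp\in U(R)$. *)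

(* Defs.v *)
From HB Require Import structures.
From mathcomp Require Import all_boot all_order all_algebra.
Set Implicit Arguments. Unset Strict Implicit. Unset Printing Implicit Defensive.
Import GRing.Theory.
Local Open Scope ring_scope.

(* Rings: associative with identity (pzRingType allows the zero ring). *)
Section StarRing.
Variable R : pzRingType.

Definition is_involution (star : R -> R) : Prop :=
  (forall x y, star (x + y) = star x + star y) /\
  (forall x y, star (x * y) = star y * star x) /\
  (forall x, star (star x) = x).

Definition idem (e : R) : Prop := e * e = e.

Definition proj (star : R -> R) (p : R) : Prop := p * p = p /\ star p = p.

Definition unit_el (u : R) : Prop := exists v, u * v = 1 /\ v * u = 1.

Definition in_rR (a x : R) : Prop := exists r, x = a * r.

Definition rcomax (a b : R) : Prop :=
  forall r : R, exists x y, a * x + b * y = r.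

Definition clean : Prop := forall a, exists e u, idem e /\ unit_el u /\ a = e + u.

Definition star_clean (star : R -> R) : Prop :=
  forall a, exists p u, proj star p /\ unit_el u /\ a = p + u.

Definition strongly_star_clean (star : R -> R) : Prop :=
  forall a, exists p u, [/\ proj star p, unit_el u, p * u = u * p & a = p + u].

Definition exchange : Prop :=
  forall a, exists e, [/\ idem e, in_rR a e & in_rR (1 - a) (1 - e)].

Definition star_abelian (star : R -> R) : Prop :=
  forall p, proj star p -> forall x, p * x = x * p.

Definition isr1 : Prop :=
  forall a b, rcomax a b -> exists e, idem e /\ unit_el (a + b * e).

Definition psr1 (star : R -> R) : Prop :=
  forall a b, rcomax a b -> exists p, proj star p /\ unit_el (a + b * p).

Definition idem_are_proj (star : R -> R) : Prop :=
  forall e, idem e -> proj star e.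
End StarRing.

(* Main.v *)
Require Import Defs.
From mathcomp Require Import all_boot all_order all_algebra.
Local Open Scope ring_scope.
Import GRing.Theory.

Section Helpers.
Variable R : pzRingType.
Variable star : R -> R.
Hypothesis Hstar : is_involution star.

Lemma star0 : star 0 = 0.
Proof.
case: Hstar => Ha _.
have h := Ha 0 0; rewrite addr0 in h.
by apply: (addrI (star 0)); rewrite addr0 -h.
Qed.

Lemma starN x : star (- x) = - star x.
Proof.
case: Hstar => Ha _.
apply/eqP; rewrite -subr_eq0 opprK -Ha addNr star0 //.
Qed.

Lemma star1 : star 1 = 1.
Proof.
case: Hstar => _ [Hm Hi].
have h := Hm (star 1) 1.
rewrite !mulr1 Hi in h. by move: h; rewrite mulr1 => <-.
Qed.

Lemma starB1 x : star (1 - x) = 1 - star x.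
Proof. by case: Hstar => Ha _; rewrite Ha starN star1. Qed.

Lemma idemC (e : R) : idem e -> idem (1 - e).
Proof. by rewrite /idem => He; rewrite mulrBl mul1r mulrBr mulr1 He subrr subr0. Qed.

Lemma projC (p : R) : proj star p -> proj star (1 - p).
Proof. by case=> H1 H2; split; [apply: idemC|rewrite starB1 H2]. Qed.

Lemma idem_mulC (e : R) : idem e -> e * (1 - e) = 0.
Proof. by move=> He; rewrite mulrBr mulr1 He subrr. Qed.

Lemma idem_Cmul (e : R) : idem e -> (1 - e) * e = 0.
Proof. by move=> He; rewrite mulrBl mul1r He subrr. Qed.

Lemma idem_add (e y : R) : idem e -> e * y = y -> y * e = 0 -> y * y = 0 -> idem (e + y).
Proof. rewrite /idem mulrDl !mulrDr => He h1 h2 h3. by rewrite He h1 h2 h3 !addr0. Qed.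

Lemma iap_central : idem_are_proj star -> forall e : R, idem e -> forall x, e * x = x * e.
Proof.
move=> Hp e He.
case: Hstar => Ha [Hm Hi].
have [_ Hse] := Hp e He.
have H1 : forall x, e * x * (1 - e) = 0.
  move=> x.
  have Hf : idem (e + e * x * (1 - e)).
    apply: idem_add => //.
    - by rewrite !mulrA He.
    - by rewrite -mulrA idem_Cmul // mulr0.
    - by rewrite !mulrA -(mulrA _ (1 - e)) idem_Cmul // mulr0 !mul0r.
  have [_ Hs] := Hp _ Hf.
  move: Hs; rewrite Ha !Hm Hse starB1 Hse => Heq.
  have := congr1 (fun y => e * y) Heq => /=.
  rewrite !mulrDr He !mulrA He idem_mulC // !mul0r => /addrI.
  by move=> <-.
have H2 : forall x, (1 - e) * x * e = 0.
  move=> x.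
  have := H1 (star x); move/(congr1 star); rewrite !Hm star0 starB1 Hse Hi.
  by rewrite mulrA.
move=> x.
have E1 : e * x = e * x * e.
  by apply/eqP; rewrite -subr_eq0 -[X in X - _]mulr1 -mulrBr H1.
have E2 : x * e = e * x * e.
  by apply/eqP; rewrite -subr_eq0 -[X in X - _]mul1r -!mulrA -mulrBl mulrA H2.
by rewrite E1 E2.
Qed.


Section Central.
Hypothesis Hc : forall e : R, idem e -> forall z, e * z = z * e.

Lemma dfin (x y : R) : x * y = 1 -> y * x = 1.
Proof.
move=> h.
have Hg : idem (y * x) by rewrite /idem mulrA -(mulrA y) h mulr1.
have Hxg : x * (y * x) = x by rewrite mulrA h mul1r.
have : (y * x) * x * y = 1 by rewrite (Hc _ Hg x) Hxg h.
by rewrite -mulrA h mulr1.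
Qed.

Lemma split_unit (e u x y : R) : idem e -> u * e * x = e -> u * (1 - e) * y = 1 - e -> unit_el u.
Proof.
move=> He h1 h2.
have h : u * (e * x + (1 - e) * y) = 1 by rewrite mulrDr !mulrA h1 h2 subrKC.
by exists (e * x + (1 - e) * y); split => //; apply: dfin.
Qed.
End Central.

Lemma E_ssc : exchange R -> idem_are_proj star -> strongly_star_clean star.
Proof.
move=> Hx Hp a; have Hc := iap_central Hp.
have [e [He [r Hr] [s Hs]]] := Hx a.
have He' := idemC _ He.
exists (1 - e), (a - (1 - e)); split.
- exact: projC _ (Hp e He).
- apply: (@split_unit Hc e _ r (- s) He).
  + rewrite mulrBl idem_Cmul // subr0 -mulrA (Hc e He r) mulrA -Hr. exact He.
  + rewrite mulrBl He' mulrN -mulNr opprB.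
    have -> : (1 - e) - a * (1 - e) = (1 - a) * (1 - e) by rewrite mulrBl mul1r.
    rewrite -mulrA (Hc _ He' s) mulrA -Hs. exact He'.
- exact: Hc _ He' _.
- by rewrite subrKC.
Qed.

Lemma E_isr : exchange R -> idem_are_proj star ->
  forall a b : R, rcomax a b -> exists p, proj star p /\ unit_el (a + b * p).
Proof.
move=> Hx Hp a b Hab; have Hc := iap_central Hp.
have [x [y Hxy]] := Hab 1.
have [e [He [r Hr] [s Hs]]] := Hx (a * x).
have He' := idemC _ He.
have Hby : 1 - a * x = b * y by rewrite -Hxy (addrC (a * x)) addrK.
rewrite Hby in Hs.
have Hv : b * (1 - e) * y * s = 1 - e.
  by rewrite -!mulrA (Hc _ He' (y * s)) !mulrA -Hs He'.
have [g [w [[Hg _] [wi [Hw1 _]] _ Hcw]]] := E_ssc Hx Hp (- (y * s * a * (1 - e))).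
pose p := g * (1 - e).
have Hpi : idem p.
  rewrite /idem /p -mulrA (mulrA (1 - e)) (Hc _ He' g) -mulrA He' mulrA Hg //.
exists p; split; first exact: Hp _ Hpi.
have Hpe : p * e = 0 by rewrite /p -mulrA idem_Cmul // mulr0.
have Hp1 : p * (1 - e) = p by rewrite /p -mulrA He'.
apply: (@split_unit Hc e _ (x * r) (- (wi * (y * s))) He).
- rewrite mulrDl -mulrA Hpe mulr0 addr0.
  rewrite -mulrA (Hc e He (x * r)) !mulrA -Hr. exact He.
- have Hw' : w = - (y * s * a * (1 - e)) - g by rewrite Hcw (addrC g w) addrK.
  have F1 : b * (1 - e) * (y * s * a * (1 - e)) = a * (1 - e).
    by rewrite !mulrA Hv (Hc _ He' a) -mulrA He'.
  have F2 : b * (1 - e) * g = b * p by rewrite -mulrA (Hc _ He' g).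
  have Hu : (a + b * p) * (1 - e) = - (b * (1 - e) * w).
    rewrite Hw' (mulrBr (b * (1 - e))) mulrN F1 F2 opprB opprK mulrDl -mulrA Hp1 addrC //.
  rewrite Hu mulrNN !mulrA -(mulrA _ w wi) Hw1 mulr1 Hv //.
Qed.


Lemma L7_iap : strongly_star_clean star -> idem_are_proj star.
Proof.
move=> H e He.
have [p [u [[Hpp Hsp] [ui [Hu1 Hu2]] Hpu Hea]]] := H e.
have Hu : u = e - p by rewrite Hea (addrC p u) addrK.
have Hep : e * p = p * e by rewrite Hea mulrDl mulrDr Hpu.
have Hz : forall z, u * z = 0 -> z = 0.
  by move=> z h; rewrite -[z]mul1r -Hu2 -mulrA h mulr0.
have H1 : p * e = 0.
  apply: Hz; rewrite Hu mulrBl !mulrA Hep -mulrA He Hpp subrr //.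
have H2 : (1 - p) * (1 - e) = 0.
  have Hep1 : e * (1 - p) = e by rewrite mulrBr mulr1 Hep H1 subr0.
  apply: Hz; rewrite mulrA Hu mulrBl (idem_mulC _ Hpp) subr0 Hep1.
  exact: idem_mulC.
move: H2; rewrite mulrBr mulr1 mulrBl mul1r H1 subr0 => /eqP; rewrite subr_eq0 => /eqP <-.
exact: projC.
Qed.

Lemma L7_clean : strongly_star_clean star -> clean R.
Proof.
move=> H a; have [p [u [[Hp _] Hu _ Ha]]] := H a.
by exists p, u.
Qed.

Lemma L4_5 : clean R -> idem_are_proj star -> exchange R.
Proof.
move=> Hcl Hp a; have Hc := iap_central Hp.
have [e [u [He [[ui [Hu1 Hu2]] Ha]]]] := Hcl a.
have He' := idemC _ He.
exists (1 - e); split => //.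
- exists ((1 - e) * ui).
  rewrite Ha mulrA mulrDl idem_mulC // add0r -(Hc _ He' u) -mulrA Hu1 mulr1 //.
- exists (- (e * ui)).
  have H1 : (1 - a) * e = - (e * u).
    by rewrite Ha mulrBl mul1r mulrDl He opprD addrA subrr add0r (Hc _ He u).
  by rewrite subKr mulrN mulrA H1 mulNr opprK -mulrA Hu1 mulr1.
Qed.

Lemma L8_5 : (forall a : R, exists p, [/\ proj star p, in_rR a p & in_rR (1 - a) (1 - p)]) ->
  exchange R /\ idem_are_proj star.
Proof.
move=> H8; split.
- move=> a; have [p [[Hp _] Hpa Hpb]] := H8 a.
  by exists p; split.
- move=> e He.
  have [p [[Hpp Hsp] [r Hr] [s Hs]]] := H8 e.
  have Hep : e * p = p by rewrite Hr mulrA He.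
  have Hx : e * (1 - p) = 0 by rewrite Hs mulrA idem_mulC // mul0r.
  move: Hx; rewrite mulrBr mulr1 Hep => /eqP; rewrite subr_eq0 => /eqP ->.
  by split.
Qed.

Lemma rcomaxN1 (a : R) : rcomax a (-1).
Proof. by move=> r; exists 0, (- r); rewrite mulr0 add0r mulN1r opprK. Qed.

Lemma isr_clean : isr1 R -> clean R.
Proof.
move=> H a; have [e [He Hu]] := H a (-1) (rcomaxN1 a).
exists e, (a + -1 * e); split => //.
by split => //; rewrite mulN1r subrKC.
Qed.

Lemma L2_7 : (forall a b : R, rcomax a b ->
          exists p, [/\ proj star p, p * a = a * p & unit_el (a + b * p)]) ->
   strongly_star_clean star.
Proof.
move=> H a; have [p [Hp Hpa Hu]] := H a (-1) (rcomaxN1 a).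
exists p, (a + -1 * p); split => //.
- by rewrite mulN1r mulrBr mulrBl Hpa.
- by rewrite mulN1r subrKC.
Qed.

End Helpers.
Arguments L2_7 {R star}.
Arguments L7_iap {R star}.
Arguments L4_5 {R star}.
Arguments L7_clean {R star}.
Arguments E_isr {R star}.
Arguments E_ssc {R star}.
Arguments L8_5 {R star}.
Arguments iap_central {R star}.
Arguments isr_clean {R}.

Theorem theorem4p5 (R : pzRingType) (star : R -> R) (Hstar : is_involution star) :
  [<-> psr1 star /\ star_abelian star;
       (forall a b : R, rcomax a b ->
          exists p, [/\ proj star p, p * a = a * p & unit_el (a + b * p)]);
       isr1 R /\ idem_are_proj star;
       clean R /\ idem_are_proj star;
       exchange R /\ idem_are_proj star;
       star_clean star /\ star_abelian star;
       strongly_star_clean star;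
       (forall a : R, exists p, [/\ proj star p, in_rR a p & in_rR (1 - a) (1 - p)])].
Proof.
tfae.
- case=> Hpsr Hab a b h. have [p [Hp Hu]] := Hpsr a b h.
  by exists p; split => //; exact: Hab.
- move=> H2.
  have H7 := L2_7 H2.
  have Hiap := L7_iap Hstar H7.
  have Hx := L4_5 Hstar (L7_clean H7) Hiap.
  split => //.
  move=> a b h; have [p [[Hp _] Hu]] := E_isr Hstar Hx Hiap _ _ h.
  by exists p.
- by case=> Hi Hiap; split => //; exact: isr_clean.
- by case=> Hcl Hiap; split => //; exact: (L4_5 Hstar Hcl Hiap).
- case=> Hx Hiap; split.
  + move=> a; have [p [u [Hp Hu _ Ha]]] := E_ssc Hstar Hx Hiap a.
    by exists p, u.
  + by move=> p [Hp _] x; exact: (iap_central Hstar Hiap _ Hp x).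
- case=> Hsc Hab a; have [p [u [Hp [Hu Ha]]]] := Hsc a.
  by exists p, u; split => //; exact: Hab.
- move=> H7; have Hiap := L7_iap Hstar H7.
  have Hx := L4_5 Hstar (L7_clean H7) Hiap.
  move=> a; have [e [He H1 H2]] := Hx a.
  by exists e; split => //; exact: Hiap.
- move=> H8; have [Hx Hiap] := L8_5 H8.
  split.
  + move=> a b h; exact: (E_isr Hstar Hx Hiap _ _ h).
  + by move=> p [Hp _] x; exact: (iap_central Hstar Hiap _ Hp x).
Qed.
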